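(* In $\mathrm{Leib}$, for every $n\ge0$ and $0\le i\le j\le n$, \[\rho_i^{n+1}\rho_j^n=\rho_{j+1}^{n+1}\rho_i^n.\]
   Context: Let $\Bbbk$ be a field and $\mathbb{K}=\bigoplus_{n\in\mathbb N}\Bbbk1_n$ with $1_n1_m=\delta_{nm}1_n$. A $\mathbb K$-algebra is the categorical algebra of a small $\Bbbk$-linear category with object set $\mathbb N$. Generators: $\partial^n_j$ ($n\ge0$, $0\le j\le n$), a morphism $n\to n+1$, and $\chi^n_i$ ($n\ge1$, $0\le i\le n-1$), an endomorphism of $n$; products with mismatched degrees are $0$. $\mathrm{Mag}$: free on the $\partial^n_j$ modulo $\partial^{n+1}_i\partial^n_j=\partial^{n+1}_{j+1}\partial^n_i$ ($0\le i<j\le n$). $\mathrm{Sym}$: free on the $\chi^n_i$ modulo $\chi^n_i\chi^n_j=\chi^n_j\chi^n_i$ ($|i-j|\ge2$), $\chi^n_i\chi^n_{i+1}\chi^n_i=\chi^n_{i+1}\chi^n_i\chi^n_{i+1}$, $\chi^n_i\chi^n_i=1_n$. $\mathrm{Sym}\otimes_\zeta\mathrm{Mag}$: generated by both with underlying bimodule $\mathrm{Sym}\otimes_{\mathbb K}\mathrm{Mag}$ and relations $\partial_i^n\chi_j^n=\chi^{n+1}_{j+1}\partial^n_i$ ($i<j$), $\chi^{n+1}_{i+1}\chi^{n+1}_i\partial^n_{i+1}$ ($i=j$), $\chi^{n+1}_{i-1}\chi^{n+1}_i\partial^n_{i-1}$ ($i=j+1$), $\chi^{n+1}_j\partial^n_i$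 ($i>j+1$). $\mathrm{Leib}$ is the quotient of $\mathrm{Sym}\otimes_\zeta\mathrm{Mag}$ by the ideal generated by $\partial^{n+1}_{j+1}\partial^n_j-(1_{n+2}-\chi^{n+2}_{j+1})\partial^{n+1}_j\partial^n_j$, $0\le j\le n$. In $\mathrm{Leib}$, $\rho^n_{-1}:=0$ and $\rho^n_j:=\partial^n_j+\sum_{a=1}^j\chi^{n+1}_j\cdots\chi^{n+1}_a\partial^n_{a-1}$ for $0\le j\le n$. *)

(* Defs.v *)
From HB Require Import structures.
From mathcomp Require Import all_boot all_algebra.
Set Implicit Arguments. Unset Strict Implicit. Unset Printing Implicit Defensive.
Import GRing.Theory.
Local Open Scope ring_scope.

(* Generators of the free K-algebra (K = ⊕_n k 1_n) on the quiver with     *)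
(* vertices ℕ:  D n j = ∂^n_j : n -> n+1   (0 <= j <= n)                    *)
(*              X n i = χ^n_i : n -> n     (n >= 1, 0 <= i <= n-1)          *)
Inductive gen := D of nat & nat | X of nat & nat.

Definition gen_code (g : gen) : bool * nat * nat :=
  match g with D n j => (true, n, j) | X n i => (false, n, i) end.
Definition gen_decode (c : bool * nat * nat) : gen :=
  let: (b, n, j) := c in if b then D n j else X n j.
Lemma gen_codeK : cancel gen_code gen_decode. Proof. by case. Qed.
HB.instance Definition _ := Equality.copy gen (can_type gen_codeK).

Definition gen_ok (g : gen) : bool :=
  match g with D n j => (j <= n)%N | X n i => (i < n)%N end.
Definition gen_src (g : gen) : nat := match g with D n _ => n | X n _ => n end.
Definition gen_tgt (g : gen) : nat := match g with D n _ => n.+1 | X n _ => n end.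

(* A path (monomial) is (s, w): source object s and word w = g1 g2 ... gm  *)
(* read as the product g1 * g2 * ... * gm (gm applied first).  The empty  *)
(* word at s is the idempotent 1_s.  [walk s w] is the target of the path *)
(* if it is a well-formed composable path, None otherwise.                *)
Definition path := (nat * seq gen)%type.

Definition walk (s : nat) (w : seq gen) : option nat :=
  foldr (fun g o => if o is Some t then
                      if gen_ok g && (gen_src g == t) then Some (gen_tgt g) else None
                    else None) (Some s) w.

Definition validp (p : path) : bool := walk p.1 p.2 != None.

Section FreeAlg.
Variable k : fieldType.

(* Elements of the free K-algebra, as formal finite sums of paths. *)
Definition fsum := seq (k * path).

(* coefficient of a path: two formal sums are equal in the free algebra  *)
(* iff all their coefficients agree *)
Definition coef (a : fsum) (p : path) : k := \sum_(x <- a | x.2 == p) x.1.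

Definition fadd (a b : fsum) : fsum := a ++ b.
Definition fscale (c : k) (a : fsum) : fsum := [seq (c * x.1, x.2) | x <- a].
Definition fsub (a b : fsum) : fsum := a ++ fscale (-1) b.

(* product: x * y is the concatenated path when target(y) = source(x),   *)
(* and 0 otherwise (products with mismatched degrees vanish) *)
Definition fmul (a b : fsum) : fsum :=
  flatten [seq [seq (x.1 * y.1, (y.2.1, x.2.2 ++ y.2.2))
               | y <- b & walk y.2.1 y.2.2 == Some x.2.1] | x <- a].

Definition mono (p : path) : fsum := [:: (1, p)].
Definition one (n : nat) : fsum := mono (n, [::]).
Definition dd (n j : nat) : fsum := mono (n, [:: D n j]).
Definition chi (n i : nat) : fsum := mono (n, [:: X n i]).

(* Defining relators of Leib (each relator r stands for the relation r = 0) *)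
Inductive leib_rel : fsum -> Prop :=
  | rel_mag n i j : (i < j)%N -> (j <= n)%N ->
      leib_rel (fsub (fmul (dd n.+1 i) (dd n j)) (fmul (dd n.+1 j.+1) (dd n i)))
  | rel_sym_far n i j : (i < n)%N -> (j < n)%N -> (i + 2 <= j)%N || (j + 2 <= i)%N ->
      leib_rel (fsub (fmul (chi n i) (chi n j)) (fmul (chi n j) (chi n i)))
  | rel_sym_braid n i : (i.+1 < n)%N ->
      leib_rel (fsub (fmul (chi n i) (fmul (chi n i.+1) (chi n i)))
                     (fmul (chi n i.+1) (fmul (chi n i) (chi n i.+1))))
  | rel_sym_inv n i : (i < n)%N ->
      leib_rel (fsub (fmul (chi n i) (chi n i)) (one n))
  (* distributive law ζ of Sym ⊗_ζ Mag:  ∂^n_i χ^n_j = ... *)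
  | rel_zeta_lt n i j : (i <= n)%N -> (j < n)%N -> (i < j)%N ->
      leib_rel (fsub (fmul (dd n i) (chi n j)) (fmul (chi n.+1 j.+1) (dd n i)))
  | rel_zeta_eq n i : (i < n)%N ->
      leib_rel (fsub (fmul (dd n i) (chi n i))
                     (fmul (chi n.+1 i.+1) (fmul (chi n.+1 i) (dd n i.+1))))
  | rel_zeta_succ n j : (j.+1 <= n)%N -> (j < n)%N ->
      leib_rel (fsub (fmul (dd n j.+1) (chi n j))
                     (fmul (chi n.+1 j) (fmul (chi n.+1 j.+1) (dd n j))))
  | rel_zeta_gt n i j : (i <= n)%N -> (j < n)%N -> (j.+1 < i)%N ->
      leib_rel (fsub (fmul (dd n i) (chi n j)) (fmul (chi n.+1 j) (dd n i)))
  | rel_leib n j : (j <= n)%N ->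
      leib_rel (fsub (fmul (dd n.+1 j.+1) (dd n j))
                     (fmul (fsub (one n.+2) (chi n.+2 j.+1))
                           (fmul (dd n.+1 j) (dd n j)))).

(* The two-sided ideal generated by the relators: k-linear combinations  *)
(* of u * r * v with r a relator and u, v paths (idempotents included). *)
Inductive leib_ideal : fsum -> Prop :=
  | ideal0 : leib_ideal [::]
  | ideal_step f c u r v : leib_ideal f -> leib_rel r -> validp u -> validp v ->
      leib_ideal (fadd f (fscale c (fmul (fmul (mono u) r) (mono v))))
  | ideal_ext f g : leib_ideal f -> (forall p, coef f p = coef g p) -> leib_ideal g.

Definition leib_eq (a b : fsum) : Prop := leib_ideal (fsub a b).

(* ρ^n_j = ∂^n_j + Σ_{a=1}^j χ^{n+1}_j ⋯ χ^{n+1}_a ∂^n_{a-1}   (ρ^n_{-1} = 0) *)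
Definition chi_chain (n j a : nat) : fsum :=
  foldr (fun m acc => fmul (chi n.+1 m) acc) (dd n a.-1) (rev (iota a (j - a).+1)).

Definition rho (n j : nat) : fsum :=
  fadd (dd n j) (flatten [seq chi_chain n j a | a <- iota 1 j]).

End FreeAlg.

(* Main.v *)
Require Import Defs.
From mathcomp Require Import all_boot all_algebra.
From Stdlib Require Import Setoid Morphisms.
From mathcomp Require Import zify ring.
Set Implicit Arguments. Unset Strict Implicit. Unset Printing Implicit Defensive.
Import GRing.Theory.

Section Basic.
Local Open Scope ring_scope.
Variable k : fieldType.
Implicit Types a b c f g : fsum k.

Definition eqc a b := forall p, coef a p = coef b p.

Lemma coef_nil p : coef ([::] : fsum k) p = 0.
Proof. by rewrite /coef big_nil. Qed.
Lemma coef_cons x a p : coef (x :: a) p = (if x.2 == p then x.1 else 0) + coef a p.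
Proof. by rewrite /coef big_cons; case: ifP; rewrite ?add0r. Qed.
Lemma coef_cat a b p : coef (a ++ b) p = coef a p + coef b p.
Proof. by rewrite /coef big_cat. Qed.
Lemma coef_scale (s : k) a p : coef (fscale s a) p = s * coef a p.
Proof. by rewrite /coef /fscale big_map mulr_sumr. Qed.
Lemma coef_sub a b p : coef (fsub a b) p = coef a p - coef b p.
Proof. by rewrite /fsub coef_cat coef_scale mulN1r. Qed.
Lemma coef_add a b p : coef (fadd a b) p = coef a p + coef b p.
Proof. exact: coef_cat. Qed.

Definition cndp (q r p : Defs.path) : bool :=
  (walk r.1 r.2 == Some q.1) && ((r.1, q.2 ++ r.2) == p).
Definition cnd (x y : k * Defs.path) (p : Defs.path) : bool := cndp x.2 y.2 p.

Lemma coef_fmul a b p : coef (fmul a b) p =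
  \sum_(x <- a) \sum_(y <- b) (if cnd x y p then x.1 * y.1 else 0).
Proof.
rewrite /coef /fmul big_flatten big_map; apply: eq_bigr => x _.
rewrite big_map big_filter_cond big_mkcond /=; apply: eq_bigr => y _.
by [].
Qed.

Lemma walk_nil_None w : foldr (fun gg o => if o is Some t then
          if gen_ok gg && (gen_src gg == t) then Some (gen_tgt gg) else None
                    else None) None w = None.
Proof. by elim: w => //= g w ->. Qed.

Lemma walk_cat s w1 w2 : walk s (w1 ++ w2) =
  if walk s w2 is Some t then walk t w1 else None.
Proof.
rewrite /walk foldr_cat; case: (foldr _ _ w2) => [t|] //; exact: walk_nil_None.
Qed.

Lemma sum_coef_seq (G : Defs.path -> k) a (s : seq Defs.path) : uniq s ->
  {subset map snd a <= s} ->
  \sum_(x <- a) x.1 * G x.2 = \sum_(q <- s) coef a q * G q.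
Proof.
move=> us; elim: a => [|x a IH] sub.
  by rewrite big_nil big1 // => q _; rewrite coef_nil mul0r.
rewrite big_cons IH; last by move=> q qa; apply: sub; rewrite inE qa orbT.
have xs : x.2 \in s by apply: sub; rewrite inE eqxx.
under [RHS]eq_bigr do rewrite coef_cons mulrDl.
rewrite big_split /=; congr (_ + _).
rewrite (bigD1_seq x.2) //= eqxx big1 ?addr0 // => q /negbTE.
by rewrite eq_sym => ->; rewrite mul0r.
Qed.

Lemma sum_lin (P : pred Defs.path) (G : Defs.path -> k) a b :
  (forall p, P p -> coef a p = coef b p) -> (forall q, ~~ P q -> G q = 0) ->
  \sum_(x <- a) x.1 * G x.2 = \sum_(x <- b) x.1 * G x.2.
Proof.
move=> Hab HG; set s := undup (map snd (a ++ b)).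
have us : uniq s by exact: undup_uniq.
rewrite (sum_coef_seq G us) ?(sum_coef_seq G us);
  try by move=> q qx; rewrite mem_undup map_cat mem_cat qx ?orbT.
apply: eq_bigr => q _; case Pq: (P q); first by rewrite Hab.
by rewrite HG ?Pq // !mulr0.
Qed.

Lemma coef_fmul_r a b p : coef (fmul a b) p =
  \sum_(y <- b) y.1 * (\sum_(x <- a) (if cnd x y p then x.1 else 0)).
Proof.
rewrite coef_fmul exchange_big; apply: eq_bigr => y _; rewrite mulr_sumr.
by apply: eq_bigr => x _; case: ifP; rewrite ?mulr0 // mulrC.
Qed.

Lemma coef_fmul_l a b p : coef (fmul a b) p =
  \sum_(x <- a) x.1 * (\sum_(y <- b) (if cnd x y p then y.1 else 0)).
Proof.
rewrite coef_fmul; apply: eq_bigr => x _; rewrite mulr_sumr.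
by apply: eq_bigr => y _; case: ifP; rewrite ?mulr0.
Qed.

Lemma fmul_vr a b b' : (forall p, validp p -> coef b p = coef b' p) ->
  eqc (fmul a b) (fmul a b').
Proof.
move=> H p; rewrite !coef_fmul_r.
apply: (sum_lin (G := fun q => \sum_(x <- a) (if cndp x.2 q p then x.1 else 0)) H) => q Hq.
apply: big1 => x _; rewrite /cndp; move: Hq; rewrite /validp negbK => /eqP ->.
by [].
Qed.

Lemma fmul_vl a a' c : (forall p, validp p -> coef a p = coef a' p) ->
  forall p, validp p -> coef (fmul a c) p = coef (fmul a' c) p.
Proof.
move=> H p vp; rewrite !coef_fmul_l.
apply: (sum_lin (G := fun q => \sum_(y <- c) (if cndp q y.2 p then y.1 else 0)) H) => q Hq.
apply: big1 => y _; rewrite /cndp; case: eqP => //= wy; case: eqP => //= ep.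
move: vp Hq; rewrite -ep /validp /= walk_cat wy.
by move=> ->.
Qed.

Lemma fmul_eqc_l a a' c : eqc a a' -> eqc (fmul a c) (fmul a' c).
Proof.
move=> H p; rewrite !coef_fmul_l.
apply: (sum_lin (P := predT) (G := fun q => \sum_(y <- c) (if cndp q y.2 p then y.1 else 0))) => //.
Qed.

Lemma fmul_eqc_r a b b' : eqc b b' -> eqc (fmul a b) (fmul a b').
Proof. by move=> H; apply: fmul_vr => p _; apply: H. Qed.

End Basic.

Section Alg.
Local Open Scope ring_scope.
Variable k : fieldType.
Implicit Types a b c f g : fsum k.

Lemma fmul_catl a a' b : fmul (a ++ a') b = fmul a b ++ fmul a' b.
Proof. by rewrite /fmul map_cat flatten_cat. Qed.

Lemma fmul_catr a b b' : eqc (fmul a (b ++ b')) (fmul a b ++ fmul a b').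
Proof.
move=> p; rewrite coef_cat !coef_fmul -big_split; apply: eq_bigr => x _.
by rewrite big_cat.
Qed.

Lemma fmul_scalel (s : k) a b : eqc (fmul (fscale s a) b) (fscale s (fmul a b)).
Proof.
move=> p; rewrite coef_scale !coef_fmul /fscale big_map mulr_sumr.
apply: eq_bigr => x _; rewrite mulr_sumr; apply: eq_bigr => y _.
by rewrite /cnd /=; case: ifP; rewrite ?mulr0 ?mulrA.
Qed.

Lemma fmul_scaler (s : k) a b : eqc (fmul a (fscale s b)) (fscale s (fmul a b)).
Proof.
move=> p; rewrite coef_scale !coef_fmul mulr_sumr.
apply: eq_bigr => x _; rewrite /fscale big_map mulr_sumr; apply: eq_bigr => y _.
by rewrite /cnd /=; case: ifP; rewrite ?mulr0 // mulrCA.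
Qed.

Lemma fmul_nill b : fmul [::] b = [::].
Proof. by []. Qed.

Lemma fmul_nilr a : eqc (fmul a [::]) [::].
Proof. by move=> p; rewrite coef_fmul coef_nil big1 // => x _; rewrite big_nil. Qed.

Lemma sum_fmul (F : Defs.path -> k) b c :
  \sum_(w <- fmul b c) w.1 * F w.2 =
  \sum_(y <- b) \sum_(z <- c)
     (if walk z.2.1 z.2.2 == Some y.2.1 then y.1 * z.1 * F (z.2.1, y.2.2 ++ z.2.2)
      else 0).
Proof.
rewrite /fmul big_flatten big_map; apply: eq_bigr => y _.
by rewrite big_map big_filter big_mkcond.
Qed.

Lemma fmulA a b c : eqc (fmul a (fmul b c)) (fmul (fmul a b) c).
Proof.
move=> p; rewrite coef_fmul_l coef_fmul_r.
pose F (x : k * Defs.path) (w : Defs.path) := if cndp x.2 w p then 1 else (0 : k).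
transitivity (\sum_(x <- a) x.1 * \sum_(w <- fmul b c) w.1 * F x w.2).
  apply: eq_bigr => x _; congr (_ * _); apply: eq_bigr => w _.
  by rewrite /cnd /F; case: ifP; rewrite ?mulr1 ?mulr0.
pose H (z : k * Defs.path) (v : Defs.path) := if cndp v z.2 p then 1 else (0 : k).
transitivity (\sum_(z <- c) z.1 * \sum_(v <- fmul a b) v.1 * H z v.2); last first.
  apply: eq_bigr => z _; congr (_ * _); apply: eq_bigr => v _.
  by rewrite /cnd /H; case: ifP; rewrite ?mulr1 ?mulr0.
under eq_bigr => x _ do rewrite sum_fmul mulr_sumr.
under [RHS]eq_bigr => z _ do rewrite sum_fmul mulr_sumr.
rewrite [RHS]exchange_big /=; apply: eq_bigr => x _.
under [RHS]eq_bigr => z _ do rewrite mulr_sumr.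
rewrite [RHS]exchange_big /=; apply: eq_bigr => y _.
rewrite mulr_sumr; apply: eq_bigr => z _.
rewrite /F /H /cndp /=.
case: (walk z.2.1 z.2.2 =P Some y.2.1) => wz /=.
  rewrite walk_cat wz catA.
  case: (walk y.2.1 y.2.2 =P Some x.2.1) => wy /=; rewrite ?mulr0 ?mul0r //.
  by case: (_ == p); rewrite ?mulr1 ?mulr0 // mulrA [RHS]mulrC.
by case: (walk y.2.1 y.2.2 =P Some x.2.1) => wy /=; rewrite ?mulr0 ?mul0r.
Qed.

Lemma mono_mul u w : eqc (fmul (mono k u) (mono k w))
  (if walk w.1 w.2 == Some u.1 then mono k (w.1, u.2 ++ w.2) else [::]).
Proof.
move=> p; rewrite /fmul /mono /=; case: ifP => _ //=.
by rewrite !coef_cons !coef_nil mulr1.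
Qed.

End Alg.

Section Ideal.
Local Open Scope ring_scope.
Variable k : fieldType.
Implicit Types a b c f g : fsum k.

Definition srct (s t : nat) a :=
  all (fun x : k * Defs.path => (x.2.1 == s) && (walk x.2.1 x.2.2 == Some t)) a.
Definition va a := all (fun x : k * Defs.path => validp x.2) a.

Lemma srct_cat s t a b : srct s t a -> srct s t b -> srct s t (a ++ b).
Proof. by rewrite /srct all_cat => -> ->. Qed.
Lemma srct_scale s t (c : k) a : srct s t a -> srct s t (fscale c a).
Proof. by rewrite /srct /fscale all_map. Qed.
Lemma srct_sub s t a b : srct s t a -> srct s t b -> srct s t (fsub a b).
Proof. by move=> ha hb; apply: srct_cat => //; apply: srct_scale. Qed.
Lemma srct_fmul s m t a b : srct m t a -> srct s m b -> srct s t (fmul a b).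
Proof.
move=> /allP ha /allP hb; apply/allP => z /flattenP [l /mapP [x xa ->]].
case/mapP => y; rewrite mem_filter => /andP [/eqP wy yb] -> /=.
have /andP [/eqP hx1 /eqP hx2] := ha x xa; have /andP [/eqP hy1 _] := hb y yb.
by rewrite walk_cat wy hy1 eqxx /= hx2.
Qed.
Lemma srct_nil s t : srct s t [::]. Proof. by []. Qed.
Lemma srct_dd n j : (j <= n)%N -> srct n n.+1 (dd k n j).
Proof. by move=> hj; rewrite /srct /= eqxx /= hj eqxx. Qed.
Lemma srct_chi n i : (i < n)%N -> srct n n (chi k n i).
Proof. by move=> hi; rewrite /srct /= eqxx /= hi eqxx. Qed.
Lemma srct_one n : srct n n (Defs.one k n).
Proof. by rewrite /srct /= !eqxx. Qed.

Lemma srct_va s t a : srct s t a -> va a.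
Proof.
move=> /allP h; apply/allP => x /h /andP [_ /eqP e]; by rewrite /validp e.
Qed.

Lemma va_fmul a b : va a -> va (fmul a b).
Proof.
move=> /allP ha; apply/allP => z /flattenP [l /mapP [x xa ->]].
case/mapP => y; rewrite mem_filter => /andP [/eqP wy yb] -> /=.
by rewrite /validp /= walk_cat wy; apply: ha.
Qed.
Lemma va_cat a b : va a -> va b -> va (a ++ b).
Proof. by rewrite /va all_cat => -> ->. Qed.
Lemma va_scale (c : k) a : va a -> va (fscale c a).
Proof. by rewrite /va /fscale all_map. Qed.
Lemma va_mono u : validp u -> va (mono k u).
Proof. by rewrite /va /= andbT. Qed.

Lemma coef_va a p : va a -> ~~ validp p -> coef a p = 0.
Proof.
move=> /allP ha hp; rewrite /coef big_seq_cond big1 // => x /andP [xa /eqP e].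
by move: (ha x xa) hp; rewrite e => ->.
Qed.

Lemma fmul_one_l s t a : srct s t a -> eqc (fmul (Defs.one k t) a) a.
Proof.
move=> /allP ha p; rewrite coef_fmul big_cons big_nil addr0 /coef [RHS]big_mkcond /=.
rewrite big_seq [RHS]big_seq; apply: eq_bigr => y ya.
rewrite /cnd /cndp /=; have /andP [_ /eqP ->] := ha y ya; rewrite eqxx /= mul1r.
by case: y {ya} => ? [].
Qed.

Lemma fmul_one_r s t a : srct s t a -> eqc (fmul a (Defs.one k s)) a.
Proof.
move=> /allP ha p; rewrite coef_fmul /coef [RHS]big_mkcond /=.
rewrite big_seq [RHS]big_seq; apply: eq_bigr => x xa.
rewrite big_cons big_nil addr0.
rewrite /cnd /cndp /=; have /andP [/eqP e _] := ha x xa; rewrite e eqxx /= mulr1 cats0.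
by move: e; case: x {xa} => ? [? ?] /= ->.
Qed.

Lemma eqc_sym f g : eqc f g -> eqc g f.
Proof. by move=> e p; rewrite e. Qed.

Lemma ideal_ext' f g : leib_ideal f -> eqc f g -> leib_ideal g.
Proof. by move=> h e; apply: ideal_ext h e. Qed.

Lemma ideal_cat f g : leib_ideal f -> leib_ideal g -> leib_ideal (f ++ g).
Proof.
move=> hf; elim=> [|g' c u r v _ IH hr hu hv|g' g'' _ IH e].
- by rewrite cats0.
- by rewrite /fadd catA; apply: ideal_step.
- by apply: ideal_ext' IH _ => p; rewrite !coef_cat e.
Qed.

Lemma ideal_scale (s : k) f : leib_ideal f -> leib_ideal (fscale s f).
Proof.
elim=> [|g c u r v _ IH hr hu hv|g g' _ IH e].
- exact: ideal0.
- apply: ideal_ext' (ideal_step (s * c) IH hr hu hv) _ => p.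
  by rewrite /fadd !(coef_cat, coef_scale) mulrDr mulrA.
- by apply: ideal_ext' IH _ => p; rewrite !coef_scale e.
Qed.

Lemma ideal_invalid g p : leib_ideal g -> ~~ validp p -> coef g p = 0.
Proof.
move=> h hp; elim: h => [|f c u r v _ IH hr hu hv|f f' _ IH e].
- exact: coef_nil.
- rewrite /fadd coef_cat IH coef_scale coef_va ?mulr0 ?addr0 //.
  by apply/va_fmul/va_fmul/va_mono.
- by rewrite -e.
Qed.

Lemma ideal_gen u r v : leib_rel r -> validp u -> validp v ->
  leib_ideal (fmul (fmul (mono k u) r) (mono k v)).
Proof.
move=> hr hu hv; have := ideal_step 1 (@ideal0 k) hr hu hv.
move/ideal_ext'; apply => p.
by rewrite /fadd coef_cat coef_nil add0r coef_scale mul1r.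
Qed.

Lemma ideal_mono_l w g : validp w -> leib_ideal g -> leib_ideal (fmul (mono k w) g).
Proof.
move=> hw; elim=> [|f c u r v _ IH hr hu hv|f f' _ IH e].
- exact: ideal0.
- apply: (@ideal_ext' (fmul (mono k w) f ++
      fscale c (fmul (fmul (fmul (mono k w) (mono k u)) r) (mono k v)))).
    apply: ideal_cat => //; apply: ideal_scale.
    have E0 := eqc_sym (fmul_eqc_l (mono k v) (fmul_eqc_l r (mono_mul k w u))).
    apply: (ideal_ext' _ E0).
    case: eqP => wu; last exact: ideal0.
    apply: ideal_gen => //; rewrite /validp /= walk_cat wu; exact: hw.
  move=> p; rewrite /fadd fmul_catr [LHS]coef_cat [RHS]coef_cat; congr (_ + _).
  rewrite fmul_scaler !coef_scale; congr (_ * _).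
  rewrite [RHS]fmulA; symmetry; apply: (fmul_eqc_l _ (fmulA _ _ _)).
- by apply: ideal_ext' IH _; apply: fmul_eqc_r.
Qed.

Lemma fmul_cons1 x a b : eqc (fmul (x :: a) b) (fscale x.1 (fmul (mono k x.2) b) ++ fmul a b).
Proof.
move=> p; rewrite -cat1s fmul_catl [LHS]coef_cat [RHS]coef_cat; congr (_ + _).
have E : eqc [:: x] (fscale x.1 (mono k x.2)).
  by move=> q; rewrite !coef_cons !coef_nil mulr1.
by rewrite -fmul_scalel (fmul_eqc_l b E).
Qed.

Lemma ideal_mull c g : va c -> leib_ideal g -> leib_ideal (fmul c g).
Proof.
move=> hc hg; elim: c hc => [_|x c IH] /=; first exact: ideal0.
case/andP => hx hc; apply: (ideal_ext' _ (eqc_sym (fmul_cons1 x c g))).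
by apply: ideal_cat; [apply/ideal_scale/ideal_mono_l | apply: IH].
Qed.

Lemma ideal_mono_r w g : leib_ideal g -> leib_ideal (fmul g (mono k w)).
Proof.
elim=> [|f c u r v _ IH hr hu hv|f f' _ IH e].
- exact: ideal0.
- apply: (@ideal_ext' (fmul f (mono k w) ++
      fscale c (fmul (fmul (mono k u) r) (fmul (mono k v) (mono k w))))).
    apply: ideal_cat => //; apply: ideal_scale.
    have E0 := eqc_sym (fmul_eqc_r (fmul (mono k u) r) (mono_mul k v w)).
    apply: (ideal_ext' _ E0).
    case: eqP => wv; last exact: (ideal_ext' (@ideal0 k) (eqc_sym (fmul_nilr _))).
    apply: ideal_gen => //; rewrite /validp /= walk_cat wv; exact: hv.
  move=> p; rewrite /fadd fmul_catl [LHS]coef_cat [RHS]coef_cat; congr (_ + _).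
  rewrite fmul_scalel !coef_scale; congr (_ * _).
  by rewrite fmulA.
- by apply: ideal_ext' IH _; apply: fmul_eqc_l.
Qed.

Lemma fmul_cons1r a y b : eqc (fmul a (y :: b)) (fscale y.1 (fmul a (mono k y.2)) ++ fmul a b).
Proof.
move=> p; rewrite -cat1s fmul_catr [LHS]coef_cat [RHS]coef_cat; congr (_ + _).
have E : eqc [:: y] (fscale y.1 (mono k y.2)).
  by move=> q; rewrite !coef_cons !coef_nil mulr1.
by rewrite -fmul_scaler (fmul_eqc_r a E).
Qed.

Lemma ideal_mulr c g : leib_ideal g -> leib_ideal (fmul g c).
Proof.
move=> hg; elim: c => [|y c IH] /=; first exact: (ideal_ext' (@ideal0 k) (eqc_sym (fmul_nilr _))).
apply: (ideal_ext' _ (eqc_sym (fmul_cons1r g y c))).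
by apply: ideal_cat; [apply/ideal_scale/ideal_mono_r | apply: IH].
Qed.

End Ideal.

Section EE.
Local Open Scope ring_scope.
Variable k : fieldType.
Implicit Types a b c f g : fsum k.

Definition E a := exists g, leib_ideal g /\ forall p, validp p -> coef a p = coef g p.

Lemma E_ext a b : E a -> (forall p, validp p -> coef a p = coef b p) -> E b.
Proof. by case=> g [hg e] h; exists g; split => // p vp; rewrite -h ?e. Qed.

Lemma E_zero a : (forall p, validp p -> coef a p = 0) -> E a.
Proof. by move=> h; exists [::]; split; [exact: ideal0| move=> p vp; rewrite h ?coef_nil]. Qed.

Lemma E_add a b : E a -> E b -> E (a ++ b).
Proof.
case=> g [hg eg] [g' [hg' eg']]; exists (g ++ g'); split; first exact: ideal_cat.
by move=> p vp; rewrite !coef_cat eg ?eg'.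
Qed.

Lemma E_scale (s : k) a : E a -> E (fscale s a).
Proof.
case=> g [hg eg]; exists (fscale s g); split; first exact: ideal_scale.
by move=> p vp; rewrite !coef_scale eg.
Qed.

Lemma vpart_coef c b p : validp p ->
  coef (fmul c b) p = coef (fmul (filter (fun x : k * Defs.path => validp x.2) c) b) p.
Proof.
move=> vp; rewrite !coef_fmul_l big_filter [RHS]big_mkcond /=.
apply: eq_bigr => x _; case: ifP => // vx.
rewrite big1 ?mulr0 // => y _; rewrite /cnd /cndp.
case: eqP => //= wy; case: eqP => //= ep.
by move: vp vx; rewrite -ep /validp /= walk_cat wy => ->.
Qed.

Lemma E_mull c a : E a -> E (fmul c a).
Proof.
case=> g [hg eg]; exists (fmul (filter (fun x : k * Defs.path => validp x.2) c) g).
split.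
  apply: ideal_mull => //; apply/allP => x; by rewrite mem_filter => /andP [].
move=> p vp; rewrite (fmul_vr _ eg) vpart_coef //.
Qed.

Lemma E_mulr c a : E a -> E (fmul a c).
Proof.
case=> g [hg eg]; exists (fmul g c); split; first exact: ideal_mulr.
by move=> p vp; rewrite (fmul_vl _ eg).
Qed.

Lemma E_rel s t r : leib_rel r -> srct s t r -> E r.
Proof.
move=> hr hst; exists (fmul (fmul (mono k (t, [::])) r) (mono k (s, [::]))).
split; first by apply: ideal_gen.
move=> p _; symmetry.
have h1 : srct s t (fmul (Defs.one k t) r) by apply: srct_fmul (srct_one _ _) hst.
rewrite (fmul_one_r h1); exact: (fmul_one_l hst).
Qed.

Lemma E_ideal a : E a -> va a -> leib_ideal a.
Proof.
case=> g [hg eg] ha; apply: (ideal_ext' hg) => p.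
case vp: (validp p); first by rewrite eg.
have nvp : ~~ validp p by rewrite vp.
by rewrite (coef_va ha nvp) (ideal_invalid hg nvp).
Qed.

Definition eqv a b := E (fsub a b).

Lemma eqv_refl a : eqv a a.
Proof. by apply: E_zero => p _; rewrite coef_sub subrr. Qed.
Lemma eqv_sym a b : eqv a b -> eqv b a.
Proof.
move=> h; apply: (E_ext (E_scale (-1) h)) => p _.
by rewrite coef_scale !coef_sub mulN1r opprB.
Qed.
Lemma eqv_trans a b c : eqv a b -> eqv b c -> eqv a c.
Proof.
move=> h1 h2; apply: (E_ext (E_add h1 h2)) => p _.
by rewrite coef_cat !coef_sub addrA subrK.
Qed.
Lemma eqc_eqv a b : eqc a b -> eqv a b.
Proof. by move=> e; apply: E_zero => p _; rewrite coef_sub e subrr. Qed.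

Lemma fadd_eqv a a' b b' : eqv a a' -> eqv b b' -> eqv (fadd a b) (fadd a' b').
Proof.
move=> h1 h2; apply: (E_ext (E_add h1 h2)) => p _.
rewrite coef_cat !coef_sub !coef_add; ring.
Qed.
Lemma fscale_eqv (s : k) a a' : eqv a a' -> eqv (fscale s a) (fscale s a').
Proof.
move=> h; apply: (E_ext (E_scale s h)) => p _.
rewrite !(coef_scale, coef_sub); ring.
Qed.
Lemma fsub_eqv a a' b b' : eqv a a' -> eqv b b' -> eqv (fsub a b) (fsub a' b').
Proof. by move=> h1 h2; apply: fadd_eqv => //; apply: fscale_eqv. Qed.

Lemma fmul_eqv a a' b b' : eqv a a' -> eqv b b' -> eqv (fmul a b) (fmul a' b').
Proof.
move=> h1 h2; apply: (E_ext (E_add (E_mulr b h1) (E_mull a' h2))) => p _.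
rewrite coef_cat !coef_sub.
have e1 : eqc (fmul (fsub a a') b) (fsub (fmul a b) (fmul a' b)).
  move=> q; rewrite /fsub fmul_catl coef_cat [RHS]coef_cat; congr (_ + _).
  exact: fmul_scalel.
have e2 : eqc (fmul a' (fsub b b')) (fsub (fmul a' b) (fmul a' b')).
  move=> q; rewrite /fsub fmul_catr coef_cat [RHS]coef_cat; congr (_ + _).
  exact: fmul_scaler.
rewrite e1 e2 !coef_sub; ring.
Qed.

End EE.

Add Parametric Relation (k : fieldType) : (fsum k) (@eqv k)
  reflexivity proved by (@eqv_refl k)
  symmetry proved by (@eqv_sym k)
  transitivity proved by (@eqv_trans k) as eqv_rel.

Add Parametric Morphism (k : fieldType) : (@fadd k)
  with signature (@eqv k) ==> (@eqv k) ==> (@eqv k) as fadd_mor.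
Proof. by move=> *; apply: fadd_eqv. Qed.
Add Parametric Morphism (k : fieldType) : (@fmul k)
  with signature (@eqv k) ==> (@eqv k) ==> (@eqv k) as fmul_mor.
Proof. by move=> *; apply: fmul_eqv. Qed.
Add Parametric Morphism (k : fieldType) : (@fsub k)
  with signature (@eqv k) ==> (@eqv k) ==> (@eqv k) as fsub_mor.
Proof. by move=> *; apply: fsub_eqv. Qed.

Section Rels.
Local Open Scope ring_scope.
Variable k : fieldType.
Implicit Types a b c f g : fsum k.
Local Notation "a ≈ b" := (eqv a b) (at level 70).
Local Notation "a ⊕ b" := (fadd a b) (at level 50, left associativity).
Local Notation "a ⊗ b" := (fmul a b) (at level 40, left associativity).
Local Notation d := (dd k).
Local Notation x := (chi k).
Local Notation r := (rho k).

Lemma addC a b : a ⊕ b ≈ b ⊕ a.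
Proof. by apply: eqc_eqv => p; rewrite !coef_add GRing.addrC. Qed.
Lemma addA a b c : a ⊕ (b ⊕ c) ≈ a ⊕ b ⊕ c.
Proof. rewrite /fadd catA; exact: eqv_refl. Qed.
Lemma mulA a b c : a ⊗ (b ⊗ c) ≈ a ⊗ b ⊗ c.
Proof. exact/eqc_eqv/fmulA. Qed.
Lemma mulDl a b c : (a ⊕ b) ⊗ c ≈ a ⊗ c ⊕ b ⊗ c.
Proof. rewrite /fadd fmul_catl; exact: eqv_refl. Qed.
Lemma mulDr a b c : a ⊗ (b ⊕ c) ≈ a ⊗ b ⊕ a ⊗ c.
Proof. exact/eqc_eqv/fmul_catr. Qed.
Lemma mul1l s t a : srct s t a -> Defs.one k t ⊗ a ≈ a.
Proof. by move=> h; exact: eqc_eqv (fmul_one_l h). Qed.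

Ltac st := repeat match goal with
 | |- is_true (srct _ _ (fsub _ _)) => apply: srct_sub
 | |- is_true (srct _ _ (fmul _ _)) => eapply srct_fmul
 | |- is_true (srct _ _ (dd _ _ _)) => apply: srct_dd
 | |- is_true (srct _ _ (chi _ _ _)) => apply: srct_chi
 | |- is_true (srct _ _ (Defs.one _ _)) => apply: srct_one
 end; try lia.

Lemma R_mag n i j : (i < j)%N -> (j <= n)%N -> d n.+1 i ⊗ d n j ≈ d n.+1 j.+1 ⊗ d n i.
Proof. by move=> h1 h2; rewrite /eqv; apply: (E_rel (rel_mag k h1 h2)); st. Qed.

Lemma R_far m i j : (i < m)%N -> (j < m)%N -> (i + 2 <= j)%N || (j + 2 <= i)%N ->
  x m i ⊗ x m j ≈ x m j ⊗ x m i.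
Proof. by move=> h1 h2 h3; rewrite /eqv; apply: (E_rel (rel_sym_far k h1 h2 h3)); st. Qed.
Lemma R_braid m i : (i.+1 < m)%N ->
  x m i ⊗ (x m i.+1 ⊗ x m i) ≈ x m i.+1 ⊗ (x m i ⊗ x m i.+1).
Proof. by move=> h1; rewrite /eqv; apply: (E_rel (rel_sym_braid k h1)); st. Qed.
Lemma R_inv m i : (i < m)%N -> x m i ⊗ x m i ≈ Defs.one k m.
Proof. by move=> h1; rewrite /eqv; apply: (E_rel (rel_sym_inv k h1)); st. Qed.
Lemma R_zlt n i j : (i <= n)%N -> (j < n)%N -> (i < j)%N ->
  d n i ⊗ x n j ≈ x n.+1 j.+1 ⊗ d n i.
Proof. by move=> h1 h2 h3; rewrite /eqv; apply: (E_rel (rel_zeta_lt k h1 h2 h3)); st. Qed.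
Lemma R_zeq n i : (i < n)%N ->
  d n i ⊗ x n i ≈ x n.+1 i.+1 ⊗ (x n.+1 i ⊗ d n i.+1).
Proof. by move=> h1; rewrite /eqv; apply: (E_rel (rel_zeta_eq k h1)); st. Qed.
Lemma R_zsucc n j : (j.+1 <= n)%N ->
  d n j.+1 ⊗ x n j ≈ x n.+1 j ⊗ (x n.+1 j.+1 ⊗ d n j).
Proof. by move=> h1; rewrite /eqv; apply: (E_rel (rel_zeta_succ k h1 h1)); st. Qed.
Lemma R_zgt n i j : (i <= n)%N -> (j < n)%N -> (j.+1 < i)%N ->
  d n i ⊗ x n j ≈ x n.+1 j ⊗ d n i.
Proof. by move=> h1 h2 h3; rewrite /eqv; apply: (E_rel (rel_zeta_gt k h1 h2 h3)); st. Qed.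
Lemma R_leib0 n j : (j <= n)%N ->
  d n.+1 j.+1 ⊗ d n j ≈ fsub (Defs.one k n.+2) (x n.+2 j.+1) ⊗ (d n.+1 j ⊗ d n j).
Proof. by move=> h1; rewrite /eqv; apply: (E_rel (rel_leib k h1)); st. Qed.

Lemma fmul_subl a a' b : eqc (fmul (fsub a a') b) (fsub (fmul a b) (fmul a' b)).
Proof.
move=> q; rewrite /fsub fmul_catl coef_cat [RHS]coef_cat; congr (_ + _).
exact: fmul_scalel.
Qed.

Lemma R_leib n j : (j <= n)%N ->
  d n.+1 j ⊗ d n j ≈ d n.+1 j.+1 ⊗ d n j ⊕ x n.+2 j.+1 ⊗ (d n.+1 j ⊗ d n j).
Proof.
move=> hj; have h := R_leib0 hj; rewrite /eqv in h *.
have hs : srct n n.+2 (d n.+1 j ⊗ d n j) by st.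
apply: (E_ext (E_scale (-1) h)) => p _.
rewrite coef_scale !coef_sub fmul_subl coef_sub coef_add (fmul_one_l hs).
ring.
Qed.

Lemma rho0 m : r m 0 ≈ d m 0.
Proof. rewrite /rho /fadd /= ?cats0; exact: eqv_refl. Qed.

Lemma coef_flatten (L : seq (fsum k)) p : coef (flatten L) p = \sum_(l <- L) coef l p.
Proof. by rewrite /coef big_flatten. Qed.

Lemma fmul_flatten a (L : seq (fsum k)) : eqc (a ⊗ flatten L) (flatten [seq a ⊗ l | l <- L]).
Proof.
elim: L => [|l L IH] p /=; first exact: fmul_nilr.
by rewrite fmul_catr !coef_cat IH.
Qed.

Lemma chain_S m j (a : nat) : (1 <= a <= j)%N ->
  chi_chain k m j.+1 a = x m.+1 j.+1 ⊗ chi_chain k m j a.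
Proof.
case/andP=> h1 h2; rewrite /chi_chain.
have -> : (j.+1 - a).+1 = (j - a).+1 + 1 by rewrite subSn //; lia.
rewrite iotaD rev_cat /=.
have -> : (a + (j - a).+1)%N = j.+1 by lia.
by [].
Qed.

Lemma chain_top m j : chi_chain k m j.+1 j.+1 = x m.+1 j.+1 ⊗ d m j.
Proof. by rewrite /chi_chain subnn. Qed.

Lemma rhoS m j : r m j.+1 ≈ d m j.+1 ⊕ x m.+1 j.+1 ⊗ r m j.
Proof.
apply: eqc_eqv => p.
have E1 : iota 1 j.+1 = iota 1 j ++ [:: j.+1].
  by rewrite -(addn1 j) iotaD add1n addn1.
rewrite /rho /fadd E1 map_cat flatten_cat.
rewrite [LHS]coef_cat [RHS]coef_cat; congr (_ + _).
set L1 := [seq chi_chain k m j.+1 a | a : nat <- iota 1 j].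
set L0 := [seq chi_chain k m j a | a : nat <- iota 1 j].
rewrite (fmul_catr _ _ _ p) (coef_cat (x m.+1 j.+1 ⊗ d m j)) (fmul_flatten _ _ p).
rewrite (coef_cat (flatten L1)) (coef_flatten L1) (coef_flatten [seq _ ⊗ l | l <- L0]).
rewrite /= chain_top /L1 /L0 !big_map cats0 [in LHS]GRing.addrC; congr (_ + _).
rewrite big_seq [RHS]big_seq; apply: eq_bigr => a ha.
by rewrite chain_S // -mem_iota.
Qed.

End Rels.

Section Locked.
Local Open Scope ring_scope.
Variable k : fieldType.
Implicit Types a b c f g : fsum k.
Local Notation "a ≈ b" := (eqv a b) (at level 70).
Local Notation "a ⊕ b" := (fadd a b) (at level 50, left associativity).
Local Notation "a ⊗ b" := (fmul a b) (at level 40, left associativity).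

Definition d m j := locked (dd k m j).
Definition x m i := locked (chi k m i).
Definition r m j := locked (rho k m j).
Definition o m := locked (Defs.one k m).
Lemma dE m j : d m j = dd k m j. Proof. by rewrite /d -lock. Qed.
Lemma xE m j : x m j = chi k m j. Proof. by rewrite /x -lock. Qed.
Lemma rE m j : r m j = rho k m j. Proof. by rewrite /r -lock. Qed.
Lemma oE m : o m = Defs.one k m. Proof. by rewrite /o -lock. Qed.

Ltac U := rewrite ?dE ?xE ?rE ?oE.

Lemma L_mag n i j : (i < j)%N -> (j <= n)%N -> d n.+1 i ⊗ d n j ≈ d n.+1 j.+1 ⊗ d n i.
Proof. U; exact: R_mag. Qed.
Lemma L_far m i j : (i < m)%N -> (j < m)%N -> (i + 2 <= j)%N || (j + 2 <= i)%N ->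
  x m i ⊗ x m j ≈ x m j ⊗ x m i.
Proof. U; exact: R_far. Qed.
Lemma L_braid m i : (i.+1 < m)%N ->
  x m i ⊗ (x m i.+1 ⊗ x m i) ≈ x m i.+1 ⊗ (x m i ⊗ x m i.+1).
Proof. U; exact: R_braid. Qed.
Lemma L_zlt n i j : (i <= n)%N -> (j < n)%N -> (i < j)%N ->
  d n i ⊗ x n j ≈ x n.+1 j.+1 ⊗ d n i.
Proof. U; exact: R_zlt. Qed.
Lemma L_zeq n i : (i < n)%N ->
  d n i ⊗ x n i ≈ x n.+1 i.+1 ⊗ (x n.+1 i ⊗ d n i.+1).
Proof. U; exact: R_zeq. Qed.
Lemma L_zsucc n j : (j.+1 <= n)%N ->
  d n j.+1 ⊗ x n j ≈ x n.+1 j ⊗ (x n.+1 j.+1 ⊗ d n j).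
Proof. U; exact: R_zsucc. Qed.
Lemma L_zgt n i j : (i <= n)%N -> (j < n)%N -> (j.+1 < i)%N ->
  d n i ⊗ x n j ≈ x n.+1 j ⊗ d n i.
Proof. U; exact: R_zgt. Qed.
Lemma L_leib n j : (j <= n)%N ->
  d n.+1 j ⊗ d n j ≈ d n.+1 j.+1 ⊗ d n j ⊕ x n.+2 j.+1 ⊗ (d n.+1 j ⊗ d n j).
Proof. U; exact: R_leib. Qed.
Lemma L_rho0 m : r m 0 ≈ d m 0.
Proof. U; exact: rho0. Qed.
Lemma L_rhoS m j : r m j.+1 ≈ d m j.+1 ⊕ x m.+1 j.+1 ⊗ r m j.
Proof. U; exact: rhoS. Qed.
Lemma inv_l m i s a : (i < m)%N -> srct s m a -> x m i ⊗ (x m i ⊗ a) ≈ a.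
Proof. U; move=> h1 h2; rewrite mulA R_inv //; exact: mul1l h2. Qed.

Lemma srct_d n j : (j <= n)%N -> srct n n.+1 (d n j).
Proof. U; exact: srct_dd. Qed.
Lemma srct_x n i : (i < n)%N -> srct n n (x n i).
Proof. U; exact: srct_chi. Qed.

Ltac st := repeat match goal with
 | |- is_true (srct _ _ (fmul _ _)) => eapply srct_fmul
 | |- is_true (srct _ _ (d _ _)) => apply: srct_d
 | |- is_true (srct _ _ (x _ _)) => apply: srct_x
 end; try lia.

Lemma rho_chi_gt m j e : (j < e)%N -> (e < m)%N -> r m j ⊗ x m e ≈ x m.+1 e.+1 ⊗ r m j.
Proof.
elim: j => [|j IH] h1 h2.
  by rewrite L_rho0; apply: L_zlt => //; lia.
rewrite L_rhoS mulDl mulDr (L_zlt (i:=j.+1)); try lia.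
rewrite -mulA IH; try lia.
rewrite mulA (L_far (i:=j.+1) (j:=e.+1)); try lia.
rewrite -mulA; reflexivity.
Qed.

Lemma rho_chi_eqS m j : (j.+1 < m)%N ->
  r m j.+1 ⊗ x m j.+1 ≈
  x m.+1 j.+2 ⊗ (x m.+1 j.+1 ⊗ d m j.+2) ⊕ x m.+1 j.+1 ⊗ (x m.+1 j.+2 ⊗ r m j).
Proof.
move=> h; rewrite L_rhoS mulDl L_zeq // -mulA rho_chi_gt //; try lia.
reflexivity.
Qed.

Lemma braid_tail m i a : (i.+1 < m)%N ->
  x m i.+1 ⊗ (x m i ⊗ (x m i.+1 ⊗ a)) ≈ x m i ⊗ (x m i.+1 ⊗ (x m i ⊗ a)).
Proof.
move=> h; transitivity ((x m i.+1 ⊗ (x m i ⊗ x m i.+1)) ⊗ a).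
  rewrite !mulA; reflexivity.
rewrite -(L_braid h) !mulA; reflexivity.
Qed.

Lemma rho_chi_lt m j e : (e < j)%N -> (j <= m)%N -> r m j ⊗ x m e ≈ x m.+1 e ⊗ r m j.
Proof.
elim: j e => [|j IH] e h1 h2; first by [].
case: (ltngtP e j) => he; last 1 first.
- subst e; case: j IH h1 h2 => [|j] IH h1 h2.
    rewrite L_rhoS L_rho0 mulDl mulDr (L_zsucc (n:=m) (j:=0)) // -mulA L_zeq //; try lia.
    rewrite (inv_l (i:=1) (m:=m.+1) (s:=m)); last by st.
    rewrite addC; reflexivity. lia.
  rewrite L_rhoS mulDl mulDr (L_zsucc (n:=m) (j:=j.+1)) //.
  rewrite -mulA rho_chi_eqS; try lia.
  rewrite mulDr (inv_l (i:=j.+2) (m:=m.+1) (s:=m)); [|lia|st].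
  rewrite braid_tail; try lia.
  rewrite L_rhoS !mulDr !addA.
  rewrite (addC (x m.+1 j.+1 ⊗ (x m.+1 j.+2 ⊗ d m j.+1))).
  reflexivity.
- rewrite L_rhoS mulDl mulDr (L_zgt (i:=j.+1) (j:=e)); try lia.
  rewrite -mulA IH; try lia.
  rewrite mulA (L_far (i:=j.+1) (j:=e)); try lia.
  rewrite -mulA; reflexivity.
- lia.
Qed.

Lemma d_rho_far n j (c : nat) : (j.+1 <= c)%N -> (c <= n)%N ->
  d n.+1 c.+1 ⊗ r n j ≈ r n.+1 j ⊗ d n c.
Proof.
elim: j => [|j IH] h1 h2.
  rewrite !L_rho0; symmetry; apply: L_mag => //; lia.
rewrite !L_rhoS mulDr mulDl -(L_mag (n:=n) (i:=j.+1) (j:=c)); try lia.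
rewrite mulA (L_zgt (n:=n.+1) (i:=c.+1) (j:=j.+1)); try lia.
rewrite -mulA IH; try lia.
rewrite mulA; reflexivity.
Qed.

Lemma d_rho_le n j i : (i <= j)%N -> (j <= n)%N ->
  d n.+1 i ⊗ r n j ≈ r n.+1 j.+1 ⊗ d n i.
Proof.
elim: j i => [|j IH] i h1 h2.
  have -> : i = 0%N by lia.
  rewrite !L_rho0 L_rhoS L_rho0 mulDl -mulA; apply: L_leib; lia.
case: (ltngtP i j.+1) => hi; last first.
- subst i. rewrite !L_rhoS mulDr mulA (L_zeq (n:=n.+1) (i:=j.+1)); try lia.
  rewrite -!mulA d_rho_far; try lia.
  rewrite ?mulDr ?mulDl -?mulA addA.
  apply: fadd_eqv; [apply: L_leib; lia | reflexivity].
- lia.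
- rewrite (L_rhoS n j) (L_rhoS n.+1 j.+1) mulDr mulDl (L_mag (n:=n) (i:=i) (j:=j.+1)); try lia.
  rewrite mulA (L_zlt (n:=n.+1) (i:=i) (j:=j.+1)); try lia.
  rewrite -mulA IH; try lia.
  rewrite mulA; reflexivity.
Qed.

Lemma main_rho n i j : (i <= j)%N -> (j <= n)%N ->
  r n.+1 i ⊗ r n j ≈ r n.+1 j.+1 ⊗ r n i.
Proof.
elim: i j => [|i IH] j h1 h2.
  rewrite !L_rho0; exact: d_rho_le.
rewrite (L_rhoS n.+1 i) (L_rhoS n i) mulDl mulDr d_rho_le; try lia.
rewrite -mulA IH; try lia.
rewrite (mulA (r n.+1 j.+1) (x n.+1 i.+1) (r n i)).
rewrite (rho_chi_lt (m:=n.+1) (j:=j.+1) (e:=i.+1)); try lia.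
rewrite -mulA; reflexivity.
Qed.

End Locked.

Lemma va_flatten (k : fieldType) (L : seq (fsum k)) : all (@va k) L -> va (flatten L).
Proof. elim: L => [|l L IH] //= /andP [h1 h2]; apply: va_cat => //; exact: IH. Qed.

Lemma va_foldr (k : fieldType) m (l : seq nat) (base : fsum k) : va base ->
  all (fun i => (i < m.+1)%N) l ->
  va (foldr (fun i acc => fmul (chi k m.+1 i) acc) base l).
Proof.
move=> hb; elim: l => [|i l IH] //= /andP [h1 h2].
apply: va_fmul; exact: srct_va (srct_chi _ h1).
Qed.

Lemma va_rho (k : fieldType) m j : (j <= m)%N -> va (rho k m j).
Proof.
move=> hj; rewrite /rho /fadd; apply: va_cat; first exact: srct_va (srct_dd _ hj).
apply: va_flatten; apply/allP => c /mapP [a ha ->].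
move: ha; rewrite mem_iota => ha.
rewrite /chi_chain; apply: va_foldr.
  apply: srct_va (srct_dd _ _); lia.
rewrite all_rev; apply/allP => i; rewrite mem_iota => hi; lia.
Qed.

Unset Implicit Arguments.

Theorem proposition3p9 (k : fieldType) (n i j : nat) :
  (i <= j)%N -> (j <= n)%N ->
  leib_eq (fmul (rho k n.+1 i) (rho k n j)) (fmul (rho k n.+1 j.+1) (rho k n i)).
Proof.
move=> h1 h2; rewrite /leib_eq; apply: E_ideal.
  have := main_rho k h1 h2; rewrite !rE; exact.
apply: va_cat; first by apply/va_fmul/va_rho; lia.
by apply/va_scale/va_fmul/va_rho; lia.
Qed.
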